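(* Let $(d_1,d_2)\in\mathbb{N}^2$. For each $s\in\mathbb{N}$, let $\chi_{d_1,d_2}(s)$ be the number of points $(m,n)\in\mathbb{Z}^2$ for which the conditions $$(m,n)=\sum_{k=1}^s\big(f(-i_k),f(-i_k-1)\big),\quad \sum_{k=1}^s f(i_k-2)\le d_1,\quad \sum_{k=1}^s f(i_k-1)\le d_2$$ admit a solution in integers $0\le i_1\le\dots\le i_s$, and $s$ is maximal with this property. Then $$\chi_{d_1,d_2}(s)=\begin{cases}2\min\{d_1,d_2,s,d_1+d_2-s\}+1 & \text{if } 0\le s\le d_1+d_2,\\ 0 & \text{if } s>d_1+d_2.\end{cases}$$ Equivalently, with $\mathbf d=(d_1,d_2)$, the set $\{\alpha\in E_{\mathbf d}:\ s_{\mathbf d}(\alpha)=s\}$ has exactly this cardinality.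
   Context: $\mathbb{N}=\{0,1,2,\dots\}$. Let $f\colon\mathbb{Z}\to\mathbb{Z}$ be defined by $f(0)=f(1)=1$ and $f(i+2)=f(i+1)+f(i)$ for all $i\in\mathbb{Z}$. Empty sums are $0$. Let $\gamma=(1+\sqrt5)/2$ and $\mathbb{Z}[\gamma]=\mathbb{Z}\oplus\mathbb{Z}\gamma^{-1}$; one has $\gamma^{-i}=f(-i)+f(-i-1)\gamma^{-1}$. For $\mathbf d=(d_1,d_2)\in\mathbb{N}^2$, $E_{\mathbf d}$ denotes the set of $\alpha\in\mathbb{Z}[\gamma]$ such that $\alpha=\sum_{k=1}^s\gamma^{-i_k}$, $\sum_{k=1}^s f(i_k-2)\le d_1$ and $\sum_{k=1}^s f(i_k-1)\le d_2$ for some $s\in\mathbb{N}$ and integers $0\le i_1\le\dots\le i_s$; for $\alpha\in E_{\mathbf d}$, $s_{\mathbf d}(\alpha)$ is the largest such $s$. *)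

(* Defs.v *)
From Stdlib Require Import ZArith Lia List Sorted.
Import ListNotations.
Open Scope Z_scope.

(* forward Fibonacci: fwd n = f(n) for n >= 0 *)
Fixpoint fwd_pair (n : nat) : Z * Z :=
  match n with
  | O => (1, 1)
  | S k => let (a, b) := fwd_pair k in (b, a + b)
  end.

(* backward: bwd_pair n = (f(-n), f(1-n)) *)
Fixpoint bwd_pair (n : nat) : Z * Z :=
  match n with
  | O => (1, 1)
  | S k => let (a, b) := bwd_pair k in (b - a, a)
  end.

(* f : Z -> Z with f 0 = f 1 = 1 and f (i+2) = f (i+1) + f i for all i. *)
Definition f (z : Z) : Z :=
  if (0 <=? z) then fst (fwd_pair (Z.to_nat z)) else fst (bwd_pair (Z.to_nat (- z))).

Lemma f_0 : f 0 = 1. Proof. reflexivity. Qed.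
Lemma f_1 : f 1 = 1. Proof. reflexivity. Qed.

Lemma fwd_rec (n : nat) : fst (fwd_pair (S (S n))) = fst (fwd_pair (S n)) + fst (fwd_pair n).
Proof.
  simpl. destruct (fwd_pair n) as [a b] eqn:E. simpl. lia.
Qed.

Lemma bwd_rec (n : nat) : fst (bwd_pair n) = fst (bwd_pair (S n)) + fst (bwd_pair (S (S n))).
Proof.
  simpl. destruct (bwd_pair n) as [a b] eqn:E. simpl. lia.
Qed.

Lemma fwd_bwd_snd (n : nat) : snd (fwd_pair n) = fst (fwd_pair (S n)).
Proof. simpl. destruct (fwd_pair n). reflexivity. Qed.

Lemma f_rec (i : Z) : f (i + 2) = f (i + 1) + f i.
Proof.
  unfold f.
  destruct (Z_lt_le_dec i (-2)) as [H|H].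
  - replace (Z.to_nat (- i)) with (S (S (Z.to_nat (- (i + 2))))) by lia.
    replace (Z.to_nat (- (i + 1))) with (S (Z.to_nat (- (i + 2)))) by lia.
    rewrite (proj2 (Z.leb_gt 0 (i+2)) ltac:(lia)),
            (proj2 (Z.leb_gt 0 (i+1)) ltac:(lia)),
            (proj2 (Z.leb_gt 0 i) ltac:(lia)).
    apply bwd_rec.
  - destruct (Z_le_gt_dec 0 i) as [H0|H0].
    + rewrite (proj2 (Z.leb_le 0 (i+2)) ltac:(lia)),
              (proj2 (Z.leb_le 0 (i+1)) ltac:(lia)),
              (proj2 (Z.leb_le 0 i) ltac:(lia)).
      replace (Z.to_nat (i + 2)) with (S (S (Z.to_nat i))) by lia.
      replace (Z.to_nat (i + 1)) with (S (Z.to_nat i)) by lia.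
      apply fwd_rec.
    + assert (i = -2 \/ i = -1) as [-> | ->] by lia; reflexivity.
Qed.

Definition zsum (l : list Z) : Z := fold_right Z.add 0 l.

Definition admits (d1 d2 : nat) (s : nat) (m n : Z) : Prop :=
  exists is : list nat,
    length is = s /\
    Sorted Nat.le is /\
    m = zsum (map (fun i => f (- Z.of_nat i)) is) /\
    n = zsum (map (fun i => f (- Z.of_nat i - 1)) is) /\
    zsum (map (fun i => f (Z.of_nat i - 2)) is) <= Z.of_nat d1 /\
    zsum (map (fun i => f (Z.of_nat i - 1)) is) <= Z.of_nat d2.

Definition max_admits (d1 d2 s : nat) (p : Z * Z) : Prop :=
  admits d1 d2 s (fst p) (snd p) /\
  forall s', admits d1 d2 s' (fst p) (snd p) -> (s' <= s)%nat.

Definition has_card {A : Type} (P : A -> Prop) (c : nat) : Prop :=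
  exists l : list A, NoDup l /\ (forall p, In p l <-> P p) /\ length l = c.

Definition chi_formula (d1 d2 s : nat) : nat :=
  if (s <=? d1 + d2)%nat
  then (2 * Nat.min (Nat.min d1 d2) (Nat.min s (d1 + d2 - s)) + 1)%nat
  else 0%nat.

(* Main.v *)
Require Import Defs.
From Stdlib Require Import ZArith Lia List Sorted Permutation Arith.
Import ListNotations.
Open Scope Z_scope.

Definition mulg (p : Z*Z) : Z*Z := (snd p, fst p + snd p).
Definition divg (p : Z*Z) : Z*Z := (snd p, fst p - snd p).
Definition stepP (p : Z*Z) : Z*Z := (fst p + snd p, fst p).

Definition cA (k : nat) : Z := fst (Nat.iter k mulg (1,0)).
Definition cB (k : nat) : Z := snd (Nat.iter k mulg (1,0)).
Definition dA (k : nat) : Z := fst (Nat.iter k divg (1,0)).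
Definition dB (k : nat) : Z := snd (Nat.iter k divg (1,0)).

Lemma cA_S k : cA (S k) = cB k. Proof. unfold cA, cB. simpl. reflexivity. Qed.
Lemma cB_S k : cB (S k) = cA k + cB k. Proof. unfold cA, cB. simpl. reflexivity. Qed.
Lemma dA_S k : dA (S k) = dB k. Proof. unfold dA, dB. simpl. reflexivity. Qed.
Lemma dB_S k : dB (S k) = dA k - dB k. Proof. unfold dA, dB. simpl. reflexivity. Qed.
Lemma cA_0 : cA 0 = 1. Proof. reflexivity. Qed.
Lemma cB_0 : cB 0 = 0. Proof. reflexivity. Qed.
Lemma dA_0 : dA 0 = 1. Proof. reflexivity. Qed.
Lemma dB_0 : dB 0 = 0. Proof. reflexivity. Qed.

Lemma iter_mulg k x y : Nat.iter k mulg (x,y) =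
  (x * cA k + y * cB k, x * cB k + y * (cA k + cB k)).
Proof.
  induction k. { unfold cA, cB; simpl. f_equal; ring. }
  rewrite Nat.iter_succ, IHk, cA_S, cB_S. unfold mulg; simpl. f_equal; ring.
Qed.

Lemma iter_divg k x y : Nat.iter k divg (x,y) =
  (x * dA k + y * dB k, x * dB k + y * (dA k - dB k)).
Proof.
  induction k. { unfold dA, dB; simpl. f_equal; ring. }
  rewrite Nat.iter_succ, IHk, dA_S, dB_S. unfold divg; simpl. f_equal; ring.
Qed.

Lemma cAB_nonneg k : 0 <= cA k /\ 0 <= cB k.
Proof. induction k; [rewrite cA_0, cB_0; lia|]. rewrite cA_S, cB_S. lia. Qed.

Lemma csum_ge k : 1 <= cA k + cB k /\ Z.of_nat k <= cA k + cB k.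
Proof.
  induction k as [k IH] using lt_wf_ind.
  destruct k as [|[|k]]. { rewrite cA_0, cB_0; simpl; lia. } { rewrite cA_S, cB_S, cA_0, cB_0; simpl; lia. }
  assert (H1 := IH (S k) ltac:(lia)). assert (H0 := IH k ltac:(lia)).
  repeat (rewrite cA_S in * || rewrite cB_S in *).
  pose proof (cAB_nonneg k). clear IH. lia.
Qed.

Lemma stepP_divg p : stepP (divg p) = p.
Proof. destruct p; unfold stepP, divg; simpl; f_equal; ring. Qed.

Lemma iter_step_divg k p : Nat.iter k stepP (Nat.iter k divg p) = p.
Proof.
  revert p; induction k; intros p; [reflexivity|].
  rewrite Nat.iter_succ_r, Nat.iter_succ, stepP_divg. apply IHk.
Qed.

Lemma f_m2 : f (-2) = 1. Proof. reflexivity. Qed.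
Lemma f_m1 : f (-1) = 0. Proof. reflexivity. Qed.

Lemma f_cst i : f (Z.of_nat i - 2) = cA i /\ f (Z.of_nat i - 1) = cB i.
Proof.
  induction i. { simpl. split; reflexivity. }
  rewrite cA_S, cB_S. destruct IHi as [H1 H2].
  replace (Z.of_nat (S i) - 2) with (Z.of_nat i - 1) by lia. split; [assumption|].
  replace (Z.of_nat (S i) - 1) with ((Z.of_nat i - 2) + 2) by lia.
  rewrite f_rec. replace (Z.of_nat i - 2 + 1) with (Z.of_nat i - 1) by lia. lia.
Qed.

Lemma f_val i : f (- Z.of_nat i) = dA i /\ f (- Z.of_nat i - 1) = dB i.
Proof.
  induction i. { simpl. split; reflexivity. }
  rewrite dA_S, dB_S. destruct IHi as [H1 H2].
  replace (- Z.of_nat (S i)) with (- Z.of_nat i - 1) by lia. split; [assumption|].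
  pose proof (f_rec (- Z.of_nat i - 2)) as E.
  replace (- Z.of_nat i - 2 + 2) with (- Z.of_nat i) in E by lia.
  replace (- Z.of_nat i - 2 + 1) with (- Z.of_nat i - 1) in E by lia.
  replace (- Z.of_nat i - 1 - 1) with (- Z.of_nat i - 2) by lia. lia.
Qed.

Fixpoint lsum (g : nat -> Z) (R : list nat) : Z :=
  match R with [] => 0 | i :: R' => g i + lsum g R' end.

Lemma lsum_app g R1 R2 : lsum g (R1 ++ R2) = lsum g R1 + lsum g R2.
Proof. induction R1; simpl; lia. Qed.
Lemma lsum_repeat g i n : lsum g (repeat i n) = Z.of_nat n * g i.
Proof. induction n; simpl repeat; simpl lsum; lia. Qed.
Lemma lsum_perm g R1 R2 : Permutation R1 R2 -> lsum g R1 = lsum g R2.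
Proof. induction 1; simpl; lia. Qed.
Lemma lsum_map g h R : lsum g (map h R) = lsum (fun i => g (h i)) R.
Proof. induction R; simpl; lia. Qed.
Lemma lsum_ext g1 g2 R : (forall i, g1 i = g2 i) -> lsum g1 R = lsum g2 R.
Proof. intros H; induction R; simpl; [lia|]. rewrite H; lia. Qed.
Lemma lsum_lin x y g1 g2 R :
  lsum (fun i => x * g1 i + y * g2 i) R = x * lsum g1 R + y * lsum g2 R.
Proof. induction R; simpl; lia. Qed.

Lemma dA_add j i : dA (j + i) = dA i * dA j + dB i * dB j.
Proof.
  unfold dA at 1. rewrite Nat.iter_add.
  rewrite (surjective_pairing (Nat.iter i divg (1,0))). rewrite iter_divg. reflexivity.
Qed.
Lemma dB_add j i : dB (j + i) = dA i * dB j + dB i * (dA j - dB j).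
Proof.
  unfold dB at 1. rewrite Nat.iter_add.
  rewrite (surjective_pairing (Nat.iter i divg (1,0))). rewrite iter_divg. reflexivity.
Qed.
Lemma cA_add j i : cA (j + i) = cA i * cA j + cB i * cB j.
Proof.
  unfold cA at 1. rewrite Nat.iter_add.
  rewrite (surjective_pairing (Nat.iter i mulg (1,0))). rewrite iter_mulg. reflexivity.
Qed.
Lemma cB_add j i : cB (j + i) = cA i * cB j + cB i * (cA j + cB j).
Proof.
  unfold cB at 1. rewrite Nat.iter_add.
  rewrite (surjective_pairing (Nat.iter i mulg (1,0))). rewrite iter_mulg. reflexivity.
Qed.

Lemma VA_shift j R : lsum dA (map (Nat.add j) R) = lsum dA R * dA j + lsum dB R * dB j.
Proof.
  rewrite lsum_map. rewrite (lsum_ext _ (fun i => dA j * dA i + dB j * dB i)).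
  - rewrite lsum_lin. ring.
  - intros i. rewrite dA_add. ring.
Qed.
Lemma VB_shift j R : lsum dB (map (Nat.add j) R) =
  lsum dA R * dB j + lsum dB R * (dA j - dB j).
Proof.
  rewrite lsum_map. rewrite (lsum_ext _ (fun i => dB j * dA i + (dA j - dB j) * dB i)).
  - rewrite lsum_lin. ring.
  - intros i. rewrite dB_add. ring.
Qed.
Lemma CA_shift j R : lsum cA (map (Nat.add j) R) = lsum cA R * cA j + lsum cB R * cB j.
Proof.
  rewrite lsum_map. rewrite (lsum_ext _ (fun i => cA j * cA i + cB j * cB i)).
  - rewrite lsum_lin. ring.
  - intros i. rewrite cA_add. ring.
Qed.
Lemma CB_shift j R : lsum cB (map (Nat.add j) R) =
  lsum cA R * cB j + lsum cB R * (cA j + cB j).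
Proof.
  rewrite lsum_map. rewrite (lsum_ext _ (fun i => cB j * cA i + (cA j + cB j) * cB i)).
  - rewrite lsum_lin. ring.
  - intros i. rewrite cB_add. ring.
Qed.

Fixpoint Mt (t : nat) : list nat :=
  match t with
  | O | S O | S (S O) => []
  | S (S (S O)) => [1;1]%nat
  | S (S t'' as t') => if Nat.even t then (2 :: map S (Mt t'))%nat
                       else (1 :: map (Nat.add 2) (Mt t''))%nat
  end.

Lemma Mt_eq t : (4 <= t)%nat -> Mt t = if Nat.even t then (2 :: map S (Mt (t-1)))%nat
                       else (1 :: map (Nat.add 2) (Mt (t-2)))%nat.
Proof. intros H. destruct t as [|[|[|[|t]]]]; try lia. reflexivity. Qed.

Lemma Mt_spec t : (3 <= t)%nat ->
  lsum dA (Mt t) = 1 + dA t /\ lsum dB (Mt t) = dB t /\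
  lsum cA (Mt t) = 1 + cA t - (if Nat.odd t then 2 else 0) /\ lsum cB (Mt t) = cB t /\
  (2 <= length (Mt t))%nat /\ ((4 <= t)%nat -> (3 <= length (Mt t))%nat) /\
  (forall x, In x (Mt t) -> (1 <= x /\ x + 1 <= t)%nat).
Proof.
  induction t as [t IH] using lt_wf_ind. intros Ht.
  destruct t as [|[|[|[|t4]]]]; try lia.
  - simpl. repeat split; try reflexivity; try lia.
  - remember (S t4) as t3. 
    destruct (Nat.even (S (S (S t3)))) eqn:E.
    +
      assert (Hm : Mt (S (S (S t3))) = (2 :: map S (Mt (S (S t3))))%nat).
      { rewrite Mt_eq by lia. rewrite E. f_equal. }
      rewrite Hm.
      assert (Hodd' : Nat.odd (S (S t3)) = true).
      { rewrite Nat.even_succ in E. exact E. }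
      assert (Hodd : Nat.odd (S (S (S t3))) = false).
      { rewrite <- Nat.negb_even, E. reflexivity. }
      destruct (IH (S (S t3)) ltac:(lia) ltac:(lia)) as (H1 & H2 & H3 & H4 & H5 & H6 & H7).
      rewrite Hodd' in H3. rewrite Hodd.
      replace (map S (Mt (S (S t3)))) with (map (Nat.add 1) (Mt (S (S t3)))) by reflexivity.
      cbn [lsum]. rewrite VA_shift, VB_shift, CA_shift, CB_shift.
      rewrite H1, H2, H3, H4.
      repeat (rewrite dA_S || rewrite dB_S || rewrite cA_S || rewrite cB_S).
      rewrite ?dA_0, ?dB_0, ?cA_0, ?cB_0.
      cbn [length]. rewrite length_map.
      split; [lia|]. split; [lia|]. split; [lia|]. split; [lia|].
      split; [lia|]. split; [lia|].
      intros x [<-|Hx]; [lia|]. apply in_map_iff in Hx. destruct Hx as (y & <- & Hy).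
      apply H7 in Hy. lia.
    + assert (Hm : Mt (S (S (S t3))) = (1 :: map (Nat.add 2) (Mt (S t3)))%nat).
      { rewrite Mt_eq by lia. rewrite E. f_equal. }
      rewrite Hm.
      assert (Hodd : Nat.odd (S (S (S t3))) = true).
      { rewrite <- Nat.negb_even, E. reflexivity. }
      assert (Hodd' : Nat.odd (S t3) = true).
      { rewrite Nat.odd_succ_succ in Hodd. exact Hodd. }
      assert (3 <= S t3)%nat by (subst t3; destruct t4; [simpl in E; discriminate | lia]).
      destruct (IH (S t3) ltac:(lia) ltac:(lia)) as (H1 & H2 & H3 & H4 & H5 & H6 & H7).
      rewrite Hodd' in H3. rewrite Hodd.
      cbn [lsum]. rewrite VA_shift, VB_shift, CA_shift, CB_shift.
      rewrite H1, H2, H3, H4.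
      repeat (rewrite dA_S || rewrite dB_S || rewrite cA_S || rewrite cB_S).
      rewrite ?dA_0, ?dB_0, ?cA_0, ?cB_0.
      cbn [length]. rewrite length_map.
      assert (3 <= S t3)%nat by lia.
      split; [lia|]. split; [lia|]. split; [lia|]. split; [lia|].
      split; [lia|]. split; [lia|].
      intros x [<-|Hx]; [lia|]. apply in_map_iff in Hx. destruct Hx as (y & <- & Hy).
      apply H7 in Hy. lia.
Qed.

Definition wl (k a b c : nat) : list nat :=
  repeat k a ++ repeat (S k) b ++ repeat (S (S k)) c.

Lemma tot_ge R : Z.of_nat (length R) <= lsum cA R + lsum cB R.
Proof.
  induction R; simpl; [lia|]. pose proof (csum_ge a). lia.
Qed.

Lemma fold_min_spec x R : In (fold_right Nat.min x R) (x :: R) /\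
  forall y, In y (x :: R) -> (fold_right Nat.min x R <= y)%nat.
Proof.
  induction R as [|z R IH]; simpl.
  - split; [left; reflexivity|]. intros y [<-|[]]; lia.
  - destruct IH as [I1 I2]. split.
    + destruct (Nat.min_spec z (fold_right Nat.min x R)) as [[_ E]|[_ E]]; rewrite E.
      * right; left; reflexivity.
      * destruct I1 as [I1|I1]; [left; assumption| right; right; assumption].
    + intros y Hy. destruct Hy as [<-|[<-|Hy]].
      * specialize (I2 x (or_introl eq_refl)). lia.
      * lia.
      * specialize (I2 y (or_intror Hy)). lia.
Qed.

Lemma fold_max_spec x R : In (fold_right Nat.max x R) (x :: R) /\
  forall y, In y (x :: R) -> (y <= fold_right Nat.max x R)%nat.
Proof.
  induction R as [|z R IH]; simpl.
  - split; [left; reflexivity|]. intros y [<-|[]]; lia.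
  - destruct IH as [I1 I2]. split.
    + destruct (Nat.max_spec z (fold_right Nat.max x R)) as [[_ E]|[_ E]]; rewrite E.
      * destruct I1 as [I1|I1]; [left; assumption| right; right; assumption].
      * right; left; reflexivity.
    + intros y Hy. destruct Hy as [<-|[<-|Hy]].
      * specialize (I2 x (or_introl eq_refl)). lia.
      * lia.
      * specialize (I2 y (or_intror Hy)). lia.
Qed.

Lemma perm_window k R : (forall y, In y R -> (k <= y /\ y <= S (S k))%nat) ->
  Permutation R (wl k (count_occ Nat.eq_dec R k) (count_occ Nat.eq_dec R (S k))
                      (count_occ Nat.eq_dec R (S (S k)))).
Proof.
  induction R as [|x R IH]; intros H; [simpl; unfold wl; simpl; constructor|].
  assert (Hx := H x (or_introl eq_refl)).
  assert (IH' := IH (fun y Hy => H y (or_intror Hy))).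
  unfold wl in *.
  destruct (Nat.eq_dec x k) as [->|N1].
  - rewrite (@count_occ_cons_eq nat Nat.eq_dec R k k eq_refl).
    rewrite (@count_occ_cons_neq nat Nat.eq_dec R k (S k) ltac:(lia)).
    rewrite (@count_occ_cons_neq nat Nat.eq_dec R k (S (S k)) ltac:(lia)).
    simpl. constructor. exact IH'.
  - rewrite (@count_occ_cons_neq nat Nat.eq_dec R x k N1).
    destruct (Nat.eq_dec x (S k)) as [->|N2].
    + rewrite (@count_occ_cons_eq nat Nat.eq_dec R (S k) (S k) eq_refl).
      rewrite (@count_occ_cons_neq nat Nat.eq_dec R (S k) (S (S k)) ltac:(lia)).
      simpl repeat at 2.
      apply Permutation_cons_app. exact IH'.
    + assert (x = S (S k)) as -> by lia.
      rewrite (@count_occ_cons_neq nat Nat.eq_dec R (S (S k)) (S k) ltac:(lia)).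
      rewrite (@count_occ_cons_eq nat Nat.eq_dec R (S (S k)) (S (S k)) eq_refl).
      simpl repeat at 3. rewrite app_assoc.
      apply Permutation_cons_app. rewrite <- app_assoc. exact IH'.
Qed.

Lemma normalize_aux n : forall R, R <> [] ->
  (Z.to_nat (2 * (lsum cA R + lsum cB R) - Z.of_nat (length R)) <= n)%nat ->
  exists k a b c, (1 <= a)%nat /\
    lsum dA (wl k a b c) = lsum dA R /\ lsum dB (wl k a b c) = lsum dB R /\
    (length R <= a + b + c)%nat /\
    lsum cA (wl k a b c) <= lsum cA R /\ lsum cB (wl k a b c) <= lsum cB R.
Proof.
  induction n as [n IHn] using lt_wf_ind. intros R HR Hn.
  destruct R as [|x R0]; [congruence|].
  set (mn := fold_right Nat.min x R0). set (mx := fold_right Nat.max x R0).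
  destruct (fold_min_spec x R0) as [Imn Lmn]. destruct (fold_max_spec x R0) as [Imx Lmx].
  fold mn in Imn, Lmn. fold mx in Imx, Lmx.
  destruct (le_lt_dec mx (S (S mn))) as [Hw|Hg].
  -
    set (R := x :: R0) in *.
    assert (HP := perm_window mn R (fun y Hy => conj (Lmn y Hy) (Nat.le_trans _ _ _ (Lmx y Hy) Hw))).
    exists mn, (count_occ Nat.eq_dec R mn), (count_occ Nat.eq_dec R (S mn)),
      (count_occ Nat.eq_dec R (S (S mn))).
    split; [apply (count_occ_In Nat.eq_dec) in Imn; lia|].
    rewrite <- !(lsum_perm _ _ _ HP).
    rewrite (Permutation_length HP). unfold wl. rewrite !length_app, !repeat_length.
    repeat split; lia.
  -
    set (R := x :: R0) in *.
    set (t := (mx - mn)%nat).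
    apply in_split in Imn. destruct Imn as (l1 & l2 & E1).
    assert (P1 : Permutation R (mn :: l1 ++ l2)) by (rewrite E1; apply Permutation_sym, Permutation_middle).
    assert (Imx' : In mx (l1 ++ l2)).
    { assert (In mx (mn :: l1 ++ l2)) by (apply (Permutation_in _ P1); exact Imx).
      destruct H as [H|H]; [lia|exact H]. }
    apply in_split in Imx'. destruct Imx' as (l3 & l4 & E2).
    assert (P2 : Permutation R (mn :: mx :: l3 ++ l4)).
    { eapply perm_trans; [exact P1|]. constructor. rewrite E2. apply Permutation_sym, Permutation_middle. }
    set (rest := l3 ++ l4) in *.
    set (R' := map (Nat.add mn) (Mt t) ++ rest).
    destruct (Mt_spec t ltac:(unfold t; lia)) as (M1 & M2 & M3 & M4 & M5 & M6 & _).
    assert (Emx : mx = (mn + t)%nat) by (unfold t; lia).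
    assert (SA : lsum dA R = dA mn + dA mx + lsum dA rest) by (rewrite (lsum_perm _ _ _ P2); simpl; lia).
    assert (SB : lsum dB R = dB mn + dB mx + lsum dB rest) by (rewrite (lsum_perm _ _ _ P2); simpl; lia).
    assert (SC : lsum cA R = cA mn + cA mx + lsum cA rest) by (rewrite (lsum_perm _ _ _ P2); simpl; lia).
    assert (SD : lsum cB R = cB mn + cB mx + lsum cB rest) by (rewrite (lsum_perm _ _ _ P2); simpl; lia).
    assert (SL : length R = (2 + length rest)%nat) by (rewrite (Permutation_length P2); reflexivity).
    assert (TA : lsum dA R' = lsum dA R).
    { unfold R'. rewrite lsum_app, VA_shift, M1, M2, SA, Emx, dA_add. ring. }
    assert (TB : lsum dB R' = lsum dB R).
    { unfold R'. rewrite lsum_app, VB_shift, M1, M2, SB, Emx, dB_add. ring. }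
    set (o := if Nat.odd t then 2 else 0) in *.
    assert (TC : lsum cA R' = lsum cA R - o * cA mn).
    { unfold R'. rewrite lsum_app, CA_shift, M3, M4, SC, Emx, cA_add. ring. }
    assert (TD : lsum cB R' = lsum cB R - o * cB mn).
    { unfold R'. rewrite lsum_app, CB_shift, M3, M4, SD, Emx, cB_add. ring. }
    assert (TL : length R' = (length (Mt t) + length rest)%nat).
    { unfold R'. rewrite length_app, length_map. reflexivity. }
    pose proof (cAB_nonneg mn). pose proof (csum_ge mn).
    assert (Ho : o = 0 \/ o = 2) by (unfold o; destruct (Nat.odd t); lia).
    assert (Hev : o = 0 -> (4 <= t)%nat).
    { intros Ho0. unfold o in Ho0. destruct (Nat.odd t) eqn:Od; [lia|].
      assert (t <> 3%nat) by (intros ->; discriminate). unfold t in *; lia. }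
    pose proof (tot_ge R'). pose proof (tot_ge R).
    assert (Hlt : (Z.to_nat (2 * (lsum cA R' + lsum cB R') - Z.of_nat (length R')) < n)%nat).
    { destruct Ho as [Ho|Ho].
      * specialize (M6 (Hev Ho)). rewrite TC, TD, TL, Ho in *. rewrite SL in Hn. lia.
      * rewrite TC, TD, TL, Ho in *. rewrite SL in Hn. nia. }
    assert (HR' : R' <> []).
    { unfold R'. destruct (Mt t); simpl in M5; [lia|]. simpl. congruence. }
    destruct (IHn _ Hlt R' HR' (le_n _)) as (k & a & b & c & Ha & W1 & W2 & W3 & W4 & W5).
    exists k, a, b, c. split; [assumption|]. rewrite <- TA, <- TB.
    repeat split; try lia.
Qed.

Lemma normalize R : R <> [] ->
  exists k a b c, (1 <= a)%nat /\
    lsum dA (wl k a b c) = lsum dA R /\ lsum dB (wl k a b c) = lsum dB R /\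
    (length R <= a + b + c)%nat /\
    lsum cA (wl k a b c) <= lsum cA R /\ lsum cB (wl k a b c) <= lsum cB R.
Proof. intros H. eapply normalize_aux; [exact H| apply le_n]. Qed.

Definition ple (p q : Z*Z) : Prop := fst p <= fst q /\ snd p <= snd q.

Definition wval (k a b c : nat) : Z*Z :=
  Nat.iter k divg (Z.of_nat (a + c), Z.of_nat b - Z.of_nat c).
Definition wcst (k a b c : nat) : Z*Z :=
  Nat.iter k mulg (Z.of_nat (a + c), Z.of_nat (b + c)).

Lemma wl_val k a b c : (lsum dA (wl k a b c), lsum dB (wl k a b c)) = wval k a b c.
Proof.
  unfold wl, wval. rewrite !lsum_app, !lsum_repeat, iter_divg.
  rewrite !dA_S, !dB_S, !dA_S. f_equal; lia.
Qed.

Lemma wl_cst k a b c : (lsum cA (wl k a b c), lsum cB (wl k a b c)) = wcst k a b c.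
Proof.
  unfold wl, wcst. rewrite !lsum_app, !lsum_repeat, iter_mulg.
  rewrite !cA_S, !cB_S, !cA_S. f_equal; lia.
Qed.

Lemma wl_len k a b c : length (wl k a b c) = (a + b + c)%nat.
Proof. unfold wl. rewrite !length_app, !repeat_length. lia. Qed.

Lemma sorted_cons x l : Sorted le l -> (forall y, In y l -> (x <= y)%nat) -> Sorted le (x :: l).
Proof.
  intros H1 H2. constructor; [exact H1|]. destruct l; constructor. apply H2. left; reflexivity.
Qed.

Lemma wl_sorted k a b c : Sorted le (wl k a b c).
Proof.
  unfold wl. induction a; simpl.
  - induction b; simpl.
    + induction c; simpl; [constructor|]. apply sorted_cons; [assumption|].
      intros y Hy. apply repeat_spec in Hy. lia.
    + apply sorted_cons; [assumption|]. intros y Hy. apply in_app_iff in Hy.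
      destruct Hy as [Hy|Hy]; apply repeat_spec in Hy; lia.
  - apply sorted_cons; [assumption|]. intros y Hy. apply in_app_iff in Hy.
    destruct Hy as [Hy|Hy]; [apply repeat_spec in Hy; lia|].
    apply in_app_iff in Hy. destruct Hy as [Hy|Hy]; apply repeat_spec in Hy; lia.
Qed.

Definition wsplit (k a b c : nat) : nat*nat*nat*nat :=
  if (2 <=? a)%nat then (k, (a-1)%nat, S b, S c) else (S k, S b, S c, 0%nat).

Lemma wsplit_spec k a b c : (1 <= a)%nat ->
  let '(k', a', b', c') := wsplit k a b c in
  (1 <= a')%nat /\ wval k' a' b' c' = wval k a b c /\ (a' + b' + c' = S (a + b + c))%nat /\
  wcst k' a' b' c' = (fst (wcst k a b c) + 2 * cB k, snd (wcst k a b c) + 2 * (cA k + cB k)) /\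
  (k <= k')%nat.
Proof.
  intros Ha. unfold wsplit. destruct (Nat.leb_spec 2 a).
  - unfold wval, wcst. rewrite !iter_mulg, !iter_divg.
    replace (Z.of_nat (a - 1 + S c)) with (Z.of_nat (a + c)) by lia.
    replace (Z.of_nat (S b) - Z.of_nat (S c)) with (Z.of_nat b - Z.of_nat c) by lia.
    replace (Z.of_nat (S b + S c)) with (Z.of_nat (b + c) + 2) by lia.
    cbn [fst snd]. repeat split; try lia; f_equal; ring.
  - assert (a = 1%nat) by lia. subst a.
    unfold wval, wcst. rewrite !Nat.iter_succ_r. unfold divg, mulg. cbn [fst snd].
    rewrite !iter_mulg, !iter_divg.
    cbn [fst snd]. repeat split; try lia; try (f_equal; nia).
Qed.

Definition PP (al : Z*Z) (j : nat) : Z*Z := Nat.iter j stepP al.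

Lemma PP_S al j : PP al (S j) = (fst (PP al j) + snd (PP al j), fst (PP al j)).
Proof. unfold PP. rewrite Nat.iter_succ. reflexivity. Qed.

Lemma PPf al j : fst (PP al (S j)) = fst (PP al j) + snd (PP al j).
Proof. rewrite PP_S. reflexivity. Qed.
Lemma PPs al j : snd (PP al (S j)) = fst (PP al j).
Proof. rewrite PP_S. reflexivity. Qed.

Lemma PP_window k a b c : PP (wval k a b c) k = (Z.of_nat (a + c), Z.of_nat b - Z.of_nat c).
Proof. unfold PP, wval. apply iter_step_divg. Qed.

Lemma PP_pos al j : 1 <= fst (PP al j) -> 1 <= fst (PP al (S j)) ->
  forall d, 1 <= fst (PP al (j + d)) /\ 1 <= fst (PP al (S (j + d))).
Proof.
  intros H1 H2 d. induction d. { rewrite Nat.add_0_r. auto. }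
  rewrite Nat.add_succ_r. destruct IHd as [I1 I2]. split; [exact I2|].
  rewrite PPf, PPs. lia.
Qed.

Lemma PP_mono al j : 1 <= fst (PP al j) -> 1 <= fst (PP al (S j)) ->
  forall d, fst (PP al (S j)) <= fst (PP al (S (j + d))).
Proof.
  intros H1 H2 d. induction d. { rewrite Nat.add_0_r. lia. }
  rewrite Nat.add_succ_r. rewrite (PPf al (S (j + d))), (PPs al (j + d)).
  destruct (PP_pos al j H1 H2 d). lia.
Qed.

Lemma size_level k a b c : (1 <= a)%nat ->
  Z.of_nat (a + b + c) = fst (PP (wval k a b c) (S k)) + Z.of_nat c.
Proof. intros. rewrite PPf, PP_window. simpl. lia. Qed.

Lemma level_lt k a b c k' a' b' c' : (1 <= a)%nat -> (1 <= a')%nat ->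
  wval k a b c = wval k' a' b' c' -> (k' < k)%nat -> (a' + b' + c' < a + b + c)%nat.
Proof.
  intros Ha Ha' E Hk.
  set (al := wval k a b c).
  assert (E1 := PP_window k a b c). assert (E2 := PP_window k' a' b' c'). rewrite <- E in E2.
  fold al in E1, E2.
  assert (S1 := size_level k a b c Ha). assert (S2 := size_level k' a' b' c' Ha').
  rewrite <- E in S2. fold al in S1, S2.
  assert (P0 : 1 <= fst (PP al k')) by (rewrite E2; simpl; lia).
  assert (P1 : 1 <= fst (PP al (S k'))) by (rewrite PP_S, E2; simpl; lia).
  assert (P2 : 1 <= fst (PP al (S (S k')))) by (rewrite PPf, PPs, PPf, E2; simpl; lia).
  assert (M := PP_mono al (S k') P1 P2 (k - S k')).
  replace (S (S k' + (k - S k')))%nat with (S k) in M by lia.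
  assert (Hq : fst (PP al (S (S k'))) = fst (PP al (S k')) + Z.of_nat (a' + c')).
  { rewrite (PPf al (S k')), (PPs al k'), E2. reflexivity. }
  lia.
Qed.

Lemma same_window k a b c k' a' b' c' : (1 <= a)%nat -> (1 <= a')%nat ->
  wval k a b c = wval k' a' b' c' -> (a + b + c = a' + b' + c')%nat ->
  k = k' /\ a = a' /\ b = b' /\ c = c'.
Proof.
  intros Ha Ha' E Hs.
  destruct (lt_eq_lt_dec k k') as [[H|H]|H].
  - pose proof (level_lt k' a' b' c' k a b c Ha' Ha (eq_sym E) H). lia.
  - subst k'. assert (E1 := PP_window k a b c). assert (E2 := PP_window k a' b' c').
    rewrite <- E in E2. rewrite E1 in E2. injection E2; intros. lia.
  - pose proof (level_lt k a b c k' a' b' c' Ha Ha' E H). lia.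
Qed.

Lemma mulg_mono k x y x' y' : x <= x' -> y <= y' ->
  ple (Nat.iter k mulg (x,y)) (Nat.iter k mulg (x',y')).
Proof.
  intros. rewrite !iter_mulg. unfold ple; simpl. pose proof (cAB_nonneg k). nia.
Qed.

Lemma cost_chain k a b c k' a' b' c' : (1 <= a)%nat -> (1 <= a')%nat ->
  wval k a b c = wval k' a' b' c' -> (a + b + c < a' + b' + c')%nat ->
  fst (wcst k a b c) + 2 * cB k <= fst (wcst k' a' b' c') /\
  snd (wcst k a b c) + 2 * (cA k + cB k) <= snd (wcst k' a' b' c').
Proof.
  intros Ha Ha' E Hs.
  set (al := wval k a b c).
  assert (E1 := PP_window k a b c). assert (E2 := PP_window k' a' b' c'). rewrite <- E in E2.
  fold al in E1, E2.
  assert (S1 := size_level k a b c Ha). assert (S2 := size_level k' a' b' c' Ha').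
  rewrite <- E in S2. fold al in S1, S2.
  assert (T : ple (Nat.iter k mulg (Z.of_nat (a + c), Z.of_nat (b + c) + 2)) (wcst k' a' b' c')).
  2:{ unfold wcst in T |- *. rewrite !iter_mulg in T. rewrite !iter_mulg.
      unfold ple in T. cbn [fst snd] in T |- *. nia. }
  destruct (lt_eq_lt_dec k k') as [[H|H]|H].
  -
    assert (P0 : 1 <= fst (PP al k)) by (rewrite E1; simpl; lia).
    assert (P1 : 1 <= fst (PP al (S k))) by (rewrite PP_S, E1; simpl; lia).
    assert (C : forall d, ple (Nat.iter (S k) mulg (PP al (S k)))
                              (Nat.iter (S k + d) mulg (PP al (S k + d)))).
    { induction d. { rewrite Nat.add_0_r. unfold ple; lia. }
      rewrite Nat.add_succ_r. 
      assert (Q : Nat.iter (S (S k + d)) mulg (PP al (S (S k + d))) =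
                  Nat.iter (S k + d) mulg (fst (PP al (S k + d)),
                     snd (PP al (S k + d)) + 2 * fst (PP al (S k + d)))).
      { rewrite Nat.iter_succ_r. rewrite PP_S. unfold mulg. cbn [fst snd]. f_equal. f_equal. lia. }
      rewrite Q. destruct (PP_pos al k P0 P1 (S d)) as [Pd _].
      replace (k + S d)%nat with (S k + d)%nat in Pd by lia.
      pose proof (mulg_mono (S k + d) (fst (PP al (S k + d))) (snd (PP al (S k + d)))
                    (fst (PP al (S k + d))) (snd (PP al (S k + d)) + 2 * fst (PP al (S k + d)))
                    ltac:(lia) ltac:(lia)) as Hm.
      rewrite <- surjective_pairing in Hm.
      unfold ple in *. lia. }
    specialize (C (k' - S k)%nat). replace (S k + (k' - S k))%nat with k' in C by lia.
    assert (B1 : Nat.iter (S k) mulg (PP al (S k)) =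
                 Nat.iter k mulg (Z.of_nat (a + c), Z.of_nat b - Z.of_nat c + 2 * Z.of_nat (a + c))).
    { rewrite Nat.iter_succ_r, PP_S, E1. unfold mulg. cbn [fst snd]. f_equal. f_equal; lia. }
    rewrite B1 in C.
    pose proof (mulg_mono k (Z.of_nat (a + c)) (Z.of_nat (b + c) + 2)
                 (Z.of_nat (a + c)) (Z.of_nat b - Z.of_nat c + 2 * Z.of_nat (a + c)) ltac:(lia) ltac:(lia)).
    assert (B2 : ple (Nat.iter k' mulg (PP al k')) (wcst k' a' b' c')).
    { rewrite E2. unfold wcst. apply mulg_mono; lia. }
    unfold ple in *. lia.
  - subst k'. rewrite E1 in E2. injection E2; intros.
    unfold wcst. apply mulg_mono; lia.
  - pose proof (level_lt k a b c k' a' b' c' Ha Ha' E H). lia.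
Qed.

Lemma zsum_map g R : zsum (map g R) = lsum g R.
Proof. induction R; simpl; [reflexivity|]. unfold zsum in *. simpl. rewrite IHR. reflexivity. Qed.

Lemma admits_iff d1 d2 s m n : admits d1 d2 s m n <->
  exists R, length R = s /\ Sorted le R /\ lsum dA R = m /\ lsum dB R = n /\
    lsum cA R <= Z.of_nat d1 /\ lsum cB R <= Z.of_nat d2.
Proof.
  unfold admits.
  assert (E1 : forall R, zsum (map (fun i => f (- Z.of_nat i)) R) = lsum dA R).
  { intros R. rewrite zsum_map. apply lsum_ext. intros i. apply f_val. }
  assert (E2 : forall R, zsum (map (fun i => f (- Z.of_nat i - 1)) R) = lsum dB R).
  { intros R. rewrite zsum_map. apply lsum_ext. intros i. apply f_val. }
  assert (E3 : forall R, zsum (map (fun i => f (Z.of_nat i - 2)) R) = lsum cA R).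
  { intros R. rewrite zsum_map. apply lsum_ext. intros i. apply f_cst. }
  assert (E4 : forall R, zsum (map (fun i => f (Z.of_nat i - 1)) R) = lsum cB R).
  { intros R. rewrite zsum_map. apply lsum_ext. intros i. apply f_cst. }
  split; intros (R & H1 & H2 & H3 & H4 & H5 & H6); exists R;
    rewrite ?E1, ?E2, ?E3, ?E4 in *; repeat split; auto.
Qed.

Lemma lsum_nonneg_c R : 0 <= lsum cA R /\ 0 <= lsum cB R.
Proof. induction R; simpl; [lia|]. pose proof (cAB_nonneg a). lia. Qed.

Lemma lsum_in_c R x : In x R -> cA x + cB x <= lsum cA R + lsum cB R.
Proof.
  induction R; simpl; [tauto|]. intros [->|H].
  - pose proof (lsum_nonneg_c R). lia.
  - specialize (IHR H). pose proof (cAB_nonneg a). lia.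
Qed.

Lemma window_bound k a b c : (1 <= a)%nat ->
  Z.of_nat k <= fst (wcst k a b c) + snd (wcst k a b c) /\
  Z.of_nat (a + b + c) <= fst (wcst k a b c) + snd (wcst k a b c).
Proof.
  intros Ha. rewrite <- (wl_cst k a b c). simpl.
  split.
  - assert (In k (wl k a b c)) by (unfold wl; apply in_or_app; left; destruct a; [lia|left; reflexivity]).
    pose proof (lsum_in_c _ _ H). pose proof (csum_ge k). lia.
  - pose proof (tot_ge (wl k a b c)). rewrite wl_len in H. lia.
Qed.

Lemma wcst_nonneg k a b c : 0 <= fst (wcst k a b c) /\ 0 <= snd (wcst k a b c).
Proof. rewrite <- (wl_cst k a b c). simpl. apply lsum_nonneg_c. Qed.

Lemma PP_zero j : PP (0,0) j = (0,0).
Proof. induction j; [reflexivity|]. rewrite PP_S, IHj. reflexivity. Qed.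

Definition maxwin (d1 d2 s k a b c : nat) : Prop :=
  (1 <= a)%nat /\ (a + b + c = s)%nat /\
  fst (wcst k a b c) <= Z.of_nat d1 /\ snd (wcst k a b c) <= Z.of_nat d2 /\
  ~ (fst (wcst k a b c) + 2 * cB k <= Z.of_nat d1 /\
     snd (wcst k a b c) + 2 * (cA k + cB k) <= Z.of_nat d2).

Lemma window_admits d1 d2 k a b c : (1 <= a)%nat ->
  fst (wcst k a b c) <= Z.of_nat d1 -> snd (wcst k a b c) <= Z.of_nat d2 ->
  admits d1 d2 (a + b + c) (fst (wval k a b c)) (snd (wval k a b c)).
Proof.
  intros Ha H1 H2. apply admits_iff. exists (wl k a b c).
  rewrite <- (wl_val k a b c). rewrite <- (wl_cst k a b c) in H1, H2. simpl in *.
  repeat split; auto using wl_len, wl_sorted.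
Qed.

Theorem char d1 d2 s m n : max_admits d1 d2 s (m, n) <->
  (s = 0%nat /\ m = 0 /\ n = 0) \/
  exists k a b c, maxwin d1 d2 s k a b c /\ wval k a b c = (m, n).
Proof.
  unfold max_admits. simpl. split.
  - intros [Ha Hmax].
    apply admits_iff in Ha. destruct Ha as (R & H1 & H2 & H3 & H4 & H5 & H6).
    destruct R as [|x R0].
    + left. simpl in *. subst. auto.
    + right. destruct (normalize (x :: R0) ltac:(congruence)) as (k & a & b & c & Ha & W1 & W2 & W3 & W4 & W5).
      assert (EV : wval k a b c = (m, n)) by (rewrite <- wl_val, W1, W2, H3, H4; reflexivity).
      assert (EC := wl_cst k a b c).
      assert (Hs : (a + b + c <= s)%nat).
      { apply Hmax. replace m with (fst (wval k a b c)) by (rewrite EV; reflexivity).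
        replace n with (snd (wval k a b c)) by (rewrite EV; reflexivity).
        apply window_admits; auto; rewrite <- EC; simpl; lia. }
      exists k, a, b, c. split; [|exact EV].
      unfold maxwin. repeat split; try lia; try (rewrite <- EC; simpl; lia).
      intros [S1 S2].
      pose proof (wsplit_spec k a b c Ha) as Sp.
      destruct (wsplit k a b c) as [[[k' a'] b'] c'].
      destruct Sp as (Sa & Sv & Ss & Sc & _).
      assert (Hadm := window_admits d1 d2 k' a' b' c' Sa ltac:(rewrite Sc; cbn [fst snd]; lia) ltac:(rewrite Sc; cbn [fst snd]; lia)).
      rewrite Sv, EV in Hadm. simpl in Hadm. apply Hmax in Hadm. lia.
  - intros [(-> & -> & ->)|(k & a & b & c & Hm & EV)].
    + split.
      * apply admits_iff. exists []. simpl. repeat split; try lia. constructor.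
      * intros s' Hs'. apply admits_iff in Hs'. destruct Hs' as (R & H1 & H2 & H3 & H4 & H5 & H6).
        destruct R as [|x R0]; [simpl in H1; lia|].
        destruct (normalize (x :: R0) ltac:(congruence)) as (k & a & b & c & Ha & W1 & W2 & W3 & W4 & W5).
        assert (EV : wval k a b c = (0, 0)) by (rewrite <- wl_val, W1, W2, H3, H4; reflexivity).
        pose proof (PP_window k a b c) as P. rewrite EV, PP_zero in P. injection P. lia.
    + destruct Hm as (Ha & Hs & C1 & C2 & Hn). split.
      * rewrite <- Hs. replace m with (fst (wval k a b c)) by (rewrite EV; reflexivity).
        replace n with (snd (wval k a b c)) by (rewrite EV; reflexivity).
        apply window_admits; auto.
      * intros s' Hs'. destruct (le_lt_dec s' s) as [Hl|Hl]; [exact Hl|exfalso].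
        apply admits_iff in Hs'. destruct Hs' as (R & H1 & H2 & H3 & H4 & H5 & H6).
        destruct R as [|x R0]; [simpl in H1; lia|].
        destruct (normalize (x :: R0) ltac:(congruence)) as (k' & a' & b' & c' & Ha' & W1 & W2 & W3 & W4 & W5).
        assert (EV' : wval k' a' b' c' = (m, n)) by (rewrite <- wl_val, W1, W2, H3, H4; reflexivity).
        assert (EC := wl_cst k' a' b' c').
        assert (Hlt : (a + b + c < a' + b' + c')%nat) by lia.
        destruct (cost_chain k a b c k' a' b' c' Ha Ha' (eq_trans EV (eq_sym EV')) Hlt) as [T1 T2].
        apply Hn. rewrite <- EC in T1, T2. cbn [fst snd] in T1, T2. lia.
Qed.
Open Scope bool_scope.

Lemma NoDup_prod {A B : Type} (l1 : list A) (l2 : list B) :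
  NoDup l1 -> NoDup l2 -> NoDup (list_prod l1 l2).
Proof.
  intros H1 H2. induction H1 as [|x l1 Hx H1 IH]; simpl; [constructor|].
  apply NoDup_app.
  - apply NoDup_map_NoDup_ForallPairs; [|exact H2].
    intros a b _ _ E. injection E; auto.
  - exact IH.
  - intros [p q] Hp Hq. apply in_map_iff in Hp. destruct Hp as (y & E & _). injection E; intros; subst.
    apply in_prod_iff in Hq. tauto.
Qed.

Lemma count_bij {A B : Type} (g : A -> B) (P : A -> bool) (Q : B -> bool)
  (l1 : list A) (l2 : list B) :
  NoDup l1 -> NoDup l2 ->
  (forall x y, In x l1 -> In y l1 -> P x = true -> P y = true -> g x = g y -> x = y) ->
  (forall x, In x l1 -> P x = true -> In (g x) l2 /\ Q (g x) = true) ->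
  (forall y, In y l2 -> Q y = true -> exists x, In x l1 /\ P x = true /\ g x = y) ->
  length (filter P l1) = length (filter Q l2).
Proof.
  intros N1 N2 Inj Fw Bw.
  rewrite <- (length_map g). apply Permutation_length. apply NoDup_Permutation.
  - apply NoDup_map_NoDup_ForallPairs; [|apply NoDup_filter; exact N1].
    intros x y Hx Hy. apply filter_In in Hx, Hy. apply Inj; tauto.
  - apply NoDup_filter; exact N2.
  - intros y. rewrite in_map_iff, filter_In. split.
    + intros (x & <- & Hx). apply filter_In in Hx. apply Fw; tauto.
    + intros [Hy Qy]. destruct (Bw y Hy Qy) as (x & Hx & Px & <-). exists x. split; [reflexivity|].
      apply filter_In. tauto.
Qed.

Lemma count_one {A : Type} (P : A -> bool) (l : list A) (x0 : A) :
  NoDup l -> In x0 l -> P x0 = true -> (forall x, In x l -> P x = true -> x = x0) ->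
  length (filter P l) = 1%nat.
Proof.
  intros N I Px U.
  change 1%nat with (length (filter (fun _ : A => true) [x0])).
  apply (count_bij (fun x => x)).
  - exact N.
  - constructor; [simpl; tauto|constructor].
  - intros x y Hx Hy Px' Py' _. rewrite (U x Hx Px'), (U y Hy Py'). reflexivity.
  - intros x Hx Px'. rewrite (U x Hx Px'). simpl; auto.
  - intros y [<-|[]] _. exists x0. auto.
Qed.

Lemma count_zero {A : Type} (P : A -> bool) (l : list A) :
  (forall x, In x l -> P x = false) -> length (filter P l) = 0%nat.
Proof.
  intros H. induction l; simpl; [reflexivity|]. rewrite H by (left; reflexivity).
  apply IHl. intros x Hx. apply H. right; exact Hx.
Qed.

Lemma count_split {A : Type} (P Q : A -> bool) (l : list A) :
  length (filter P l) = (length (filter (fun x => P x && Q x) l) +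
                         length (filter (fun x => P x && negb (Q x)) l))%nat.
Proof.
  induction l; simpl; [reflexivity|].
  destruct (P a), (Q a); simpl; rewrite IHl; lia.
Qed.

Lemma count_ext {A : Type} (P Q : A -> bool) (l : list A) :
  (forall x, In x l -> P x = Q x) -> length (filter P l) = length (filter Q l).
Proof. intros H. f_equal. apply filter_ext_in. exact H. Qed.

Definition W4 := (nat * nat * nat * nat)%type.
Definition Wall (B : nat) : list W4 :=
  list_prod (list_prod (list_prod (seq 0 (S B)) (seq 1 B)) (seq 0 (S B))) (seq 0 (S B)).

Lemma Wall_NoDup B : NoDup (Wall B).
Proof. unfold Wall. repeat apply NoDup_prod; apply seq_NoDup. Qed.

Lemma in_Wall B k a b c : In (k, a, b, c) (Wall B) <->
  (k <= B /\ 1 <= a <= B /\ b <= B /\ c <= B)%nat.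
Proof.
  unfold Wall. rewrite !in_prod_iff, !in_seq. lia.
Qed.

Definition wk (w : W4) : nat := let '(k, _, _, _) := w in k.
Definition wsz (w : W4) : nat := let '(_, a, b, c) := w in (a + b + c)%nat.
Definition wcs (w : W4) : Z*Z := let '(k, a, b, c) := w in wcst k a b c.
Definition wsp (w : W4) : Z*Z := let '(k, a, b, c) := w in
  (fst (wcst k a b c) + 2 * cB k, snd (wcst k a b c) + 2 * (cA k + cB k)).
Definition peqb (p q : Z*Z) : bool := (fst p =? fst q) && (snd p =? snd q).

Lemma peqb_spec p q : peqb p q = true <-> p = q.
Proof.
  unfold peqb. rewrite Bool.andb_true_iff, !Z.eqb_eq. destruct p, q; simpl. split.
  - intros [-> ->]; reflexivity.
  - intros E; injection E; auto.
Qed.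

Definition unmulg (p : Z*Z) : Z*Z := (snd p - fst p, fst p).

Lemma wcst_S k a b c : wcst (S k) a b c = mulg (wcst k a b c).
Proof. unfold wcst. rewrite Nat.iter_succ. reflexivity. Qed.

Lemma mulg_inj p q : mulg p = q -> p = unmulg q.
Proof. destruct p, q; unfold mulg, unmulg; simpl; intros E; injection E; intros; f_equal; lia. Qed.
Lemma mulg_unmulg q : mulg (unmulg q) = q.
Proof. destruct q; unfold mulg, unmulg; simpl; f_equal; lia. Qed.

Definition ind (b : bool) : Z := if b then 1 else 0.

Ltac zcase :=
  repeat (match goal with
          | |- context [Z.leb ?x ?y] => destruct (Z.leb_spec x y)
          | |- context [Z.ltb ?x ?y] => destruct (Z.ltb_spec x y)
          | |- context [Z.eqb ?x ?y] => destruct (Z.eqb_spec x y)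
          end; cbn [andb orb negb ind]; try (exfalso; lia)).

Section Count.
Variables (B : nat) (s : nat).

Definition Gc (V : Z*Z) : nat :=
  length (filter (fun w => (wsz w =? s)%nat && peqb (wcs w) V) (Wall B)).
Definition Hc (V : Z*Z) : nat :=
  length (filter (fun w => (wsz w =? s)%nat && peqb (wsp w) V) (Wall B)).

Lemma wsp_S k a b c : wsp (S k, a, b, c) = mulg (wsp (k, a, b, c)).
Proof.
  unfold wsp. rewrite wcst_S. unfold mulg. rewrite cA_S, cB_S. cbn [fst snd]. f_equal; lia.
Qed.

Lemma wcs_ge w : In w (Wall B) -> 0 <= fst (wcs w) /\ 0 <= snd (wcs w) /\
  1 <= fst (wcs w) + snd (wcs w) /\ Z.of_nat (wk w) <= fst (wcs w) + snd (wcs w).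
Proof.
  destruct w as [[[k a] b] c]. intros H. apply in_Wall in H. simpl.
  pose proof (wcst_nonneg k a b c). pose proof (window_bound k a b c ltac:(lia)). lia.
Qed.

Lemma wsp_ge w : In w (Wall B) -> fst (wcs w) <= fst (wsp w) /\ snd (wcs w) + 1 <= snd (wsp w).
Proof.
  destruct w as [[[k a] b] c]. intros H. unfold wcs, wsp. cbn [fst snd]. pose proof (cAB_nonneg k). pose proof (csum_ge k). lia.
Qed.

Lemma Gc_neg V : fst V < 0 \/ snd V < 0 \/ V = (0,0) -> Gc V = 0%nat.
Proof.
  intros HV. unfold Gc. apply count_zero. intros w Hw.
  destruct (wsz w =? s)%nat; [|reflexivity]. simpl.
  destruct (peqb (wcs w) V) eqn:E; [|reflexivity]. apply peqb_spec in E. subst V.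
  pose proof (wcs_ge w Hw). destruct HV as [HV|[HV|HV]]; try lia. rewrite HV in H. simpl in H. lia.
Qed.

Lemma Hc_neg V : fst V < 0 \/ snd V < 0 \/ V = (0,0) -> Hc V = 0%nat.
Proof.
  intros HV. unfold Hc. apply count_zero. intros w Hw.
  destruct (wsz w =? s)%nat; [|reflexivity]. simpl.
  destruct (peqb (wsp w) V) eqn:E; [|reflexivity]. apply peqb_spec in E. subst V.
  pose proof (wcs_ge w Hw). pose proof (wsp_ge w Hw).
  destruct HV as [HV|[HV|HV]]; try lia. rewrite HV in H0. simpl in H0. lia.
Qed.

Definition G0 (V : Z*Z) : nat :=
  length (filter (fun w => ((wsz w =? s)%nat && peqb (wcs w) V) && (wk w =? 0)%nat) (Wall B)).
Definition H0 (V : Z*Z) : nat :=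
  length (filter (fun w => ((wsz w =? s)%nat && peqb (wsp w) V) && (wk w =? 0)%nat) (Wall B)).

Lemma G_shift V : fst V + snd V <= Z.of_nat B ->
  length (filter (fun w => ((wsz w =? s)%nat && peqb (wcs w) V) && negb (wk w =? 0)%nat) (Wall B))
  = Gc (unmulg V).
Proof.
  intros HB. symmetry. unfold Gc.
  apply (count_bij (fun w => let '(k, a, b, c) := w in (S k, a, b, c))).
  - apply Wall_NoDup.
  - apply Wall_NoDup.
  - intros [[[k a] b] c] [[[k' a'] b'] c'] _ _ _ _ E. injection E; intros; subst; reflexivity.
  - intros [[[k a] b] c] Hw Pw. apply Bool.andb_true_iff in Pw. destruct Pw as [P1 P2].
    apply peqb_spec in P2. cbn [wcs wsz wk] in P1, P2.
    assert (E : wcst (S k) a b c = V) by (rewrite wcst_S, P2, mulg_unmulg; reflexivity).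
    apply in_Wall in Hw.
    pose proof (window_bound (S k) a b c ltac:(lia)). rewrite E in H.
    split.
    + apply in_Wall. lia.
    + change (((a + b + c =? s)%nat && peqb (wcst (S k) a b c) V) && negb (S k =? 0)%nat = true).
      rewrite P1, E, (proj2 (peqb_spec V V) eq_refl). reflexivity.
  - intros [[[k a] b] c] Hw Q. apply Bool.andb_true_iff in Q. destruct Q as [Q1 Q3].
    apply Bool.andb_true_iff in Q1. destruct Q1 as [Q1 Q2]. apply peqb_spec in Q2.
    cbn [wcs wsz wk] in Q1, Q2, Q3.
    destruct k as [|k]; [discriminate|].
    exists (k, a, b, c). apply in_Wall in Hw. split; [apply in_Wall; lia|]. split; [|reflexivity].
    change (((a + b + c =? s)%nat && peqb (wcst k a b c) (unmulg V)) = true).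
    rewrite Q1. apply peqb_spec. apply mulg_inj. rewrite <- wcst_S. exact Q2.
Qed.

Lemma H_shift V : fst V + snd V <= Z.of_nat B ->
  length (filter (fun w => ((wsz w =? s)%nat && peqb (wsp w) V) && negb (wk w =? 0)%nat) (Wall B))
  = Hc (unmulg V).
Proof.
  intros HB. symmetry. unfold Hc.
  apply (count_bij (fun w => let '(k, a, b, c) := w in (S k, a, b, c))).
  - apply Wall_NoDup.
  - apply Wall_NoDup.
  - intros [[[k a] b] c] [[[k' a'] b'] c'] _ _ _ _ E. injection E; intros; subst; reflexivity.
  - intros [[[k a] b] c] Hw Pw. apply Bool.andb_true_iff in Pw. destruct Pw as [P1 P2].
    apply peqb_spec in P2. 
    assert (E : wsp (S k, a, b, c) = V) by (rewrite wsp_S, P2, mulg_unmulg; reflexivity).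
    apply in_Wall in Hw.
    pose proof (window_bound (S k) a b c ltac:(lia)).
    pose proof (wsp_ge (S k, a, b, c)) as G.
    assert (Ge : fst (wcst (S k) a b c) <= fst (wsp (S k, a, b, c)) /\
                 snd (wcst (S k) a b c) + 1 <= snd (wsp (S k, a, b, c))).
    { unfold wsp. pose proof (cAB_nonneg (S k)). pose proof (csum_ge (S k)). cbn [fst snd]. lia. }
    rewrite E in Ge.
    split.
    + apply in_Wall. lia.
    + cbn [wsz] in P1. change (((a + b + c =? s)%nat && peqb (wsp (S k, a, b, c)) V) && negb (S k =? 0)%nat = true).
      rewrite P1, E, (proj2 (peqb_spec V V) eq_refl). reflexivity.
  - intros [[[k a] b] c] Hw Q. apply Bool.andb_true_iff in Q. destruct Q as [Q1 Q3].
    apply Bool.andb_true_iff in Q1. destruct Q1 as [Q1 Q2]. apply peqb_spec in Q2.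
    cbn [wk] in Q3.
    destruct k as [|k]; [discriminate|].
    exists (k, a, b, c). apply in_Wall in Hw. split; [apply in_Wall; lia|]. split; [|reflexivity].
    apply Bool.andb_true_iff. split; [exact Q1|]. apply peqb_spec. apply mulg_inj. rewrite <- wsp_S. exact Q2.
Qed.

Lemma wcst_0 a b c : wcst 0 a b c = (Z.of_nat (a + c), Z.of_nat (b + c)).
Proof. reflexivity. Qed.

Lemma G0_val V : 0 <= fst V -> 0 <= snd V -> fst V + snd V <= Z.of_nat B ->
  Z.of_nat (G0 V) = ind ((fst V <=? Z.of_nat s) && (snd V + 1 <=? Z.of_nat s) &&
                         (Z.of_nat s <=? fst V + snd V)).
Proof.
  destruct V as [v1 v2]. cbn [fst snd]. intros H1 H2 HB. unfold G0.
  destruct ((v1 <=? Z.of_nat s) && (v2 + 1 <=? Z.of_nat s) && (Z.of_nat s <=? v1 + v2)) eqn:C.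
  - apply Bool.andb_true_iff in C. destruct C as [C C3]. apply Bool.andb_true_iff in C. destruct C as [C1 C2].
    apply Z.leb_le in C1, C2, C3.
    rewrite (count_one _ _ (0%nat, Z.to_nat (Z.of_nat s - v2), Z.to_nat (Z.of_nat s - v1),
                           Z.to_nat (v1 + v2 - Z.of_nat s))).
    + reflexivity.
    + apply Wall_NoDup.
    + apply in_Wall. lia.
    + cbn [wsz wcs wk]. rewrite wcst_0. apply Bool.andb_true_iff; split; [apply Bool.andb_true_iff; split|reflexivity].
      * apply Nat.eqb_eq. lia.
      * apply peqb_spec. f_equal; lia.
    + intros [[[k a] b] c] Hw P. apply Bool.andb_true_iff in P. destruct P as [P P3].
      apply Bool.andb_true_iff in P. destruct P as [P1 P2]. apply peqb_spec in P2.
      cbn [wsz wcs wsp wk] in P1, P2, P3. apply Nat.eqb_eq in P1, P3. subst k. rewrite wcst_0 in P2.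
      injection P2; intros. f_equal; [f_equal; [f_equal|]|]; lia.
  - rewrite count_zero; [reflexivity|].
    intros [[[k a] b] c] Hw. apply in_Wall in Hw.
    destruct ((wsz (k, a, b, c) =? s)%nat && peqb (wcs (k, a, b, c)) (v1, v2) && (wk (k, a, b, c) =? 0)%nat) eqn:P;
      [|reflexivity].
    apply Bool.andb_true_iff in P. destruct P as [P P3].
    apply Bool.andb_true_iff in P. destruct P as [P1 P2]. apply peqb_spec in P2.
    cbn [wsz wcs wsp wk] in P1, P2, P3. apply Nat.eqb_eq in P1, P3. subst k. rewrite wcst_0 in P2.
    injection P2; intros.
    rewrite <- C. symmetry. apply Bool.andb_true_iff; split; [apply Bool.andb_true_iff; split|]; apply Z.leb_le; lia.
Qed.

Lemma wsp_0 a b c : wsp (0%nat, a, b, c) = (Z.of_nat (a + c), Z.of_nat (b + c) + 2).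
Proof. unfold wsp. rewrite wcst_0. rewrite cA_0, cB_0. cbn [fst snd]. f_equal; lia. Qed.

Lemma H0_val V : 0 <= fst V -> 0 <= snd V -> fst V + snd V <= Z.of_nat B ->
  Z.of_nat (H0 V) = ind ((fst V <=? Z.of_nat s) && (snd V - 1 <=? Z.of_nat s) &&
                         (Z.of_nat s <=? fst V + snd V - 2)).
Proof.
  destruct V as [v1 v2]. cbn [fst snd]. intros H1 H2 HB. unfold H0.
  destruct ((v1 <=? Z.of_nat s) && (v2 - 1 <=? Z.of_nat s) && (Z.of_nat s <=? v1 + v2 - 2)) eqn:C.
  - apply Bool.andb_true_iff in C. destruct C as [C C3]. apply Bool.andb_true_iff in C. destruct C as [C1 C2].
    apply Z.leb_le in C1, C2, C3.
    rewrite (count_one _ _ (0%nat, Z.to_nat (Z.of_nat s + 2 - v2), Z.to_nat (Z.of_nat s - v1),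
                           Z.to_nat (v1 + v2 - 2 - Z.of_nat s))).
    + reflexivity.
    + apply Wall_NoDup.
    + apply in_Wall. lia.
    + apply Bool.andb_true_iff; split; [apply Bool.andb_true_iff; split|reflexivity].
      * apply Nat.eqb_eq. cbn [wsz]. lia.
      * rewrite wsp_0. apply peqb_spec. f_equal; lia.
    + intros [[[k a] b] c] Hw P. apply Bool.andb_true_iff in P. destruct P as [P P3].
      apply Bool.andb_true_iff in P. destruct P as [P1 P2]. apply peqb_spec in P2.
      cbn [wsz wk] in P1, P3. apply Nat.eqb_eq in P1, P3. subst k. rewrite wsp_0 in P2.
      injection P2; intros. f_equal; [f_equal; [f_equal|]|]; lia.
  - rewrite count_zero; [reflexivity|].
    intros [[[k a] b] c] Hw. apply in_Wall in Hw.
    destruct ((wsz (k, a, b, c) =? s)%nat && peqb (wsp (k, a, b, c)) (v1, v2) && (wk (k, a, b, c) =? 0)%nat) eqn:P;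
      [|reflexivity].
    apply Bool.andb_true_iff in P. destruct P as [P P3].
    apply Bool.andb_true_iff in P. destruct P as [P1 P2]. apply peqb_spec in P2.
    cbn [wsz wk] in P1, P3. apply Nat.eqb_eq in P1, P3. subst k. rewrite wsp_0 in P2.
    injection P2; intros.
    rewrite <- C. symmetry. apply Bool.andb_true_iff; split; [apply Bool.andb_true_iff; split|]; apply Z.leb_le; lia.
Qed.

Lemma D_rec V : 0 <= fst V -> 0 <= snd V -> fst V + snd V <= Z.of_nat B ->
  Z.of_nat (Gc V) - Z.of_nat (Hc V) =
  Z.of_nat (G0 V) - Z.of_nat (H0 V) + (Z.of_nat (Gc (unmulg V)) - Z.of_nat (Hc (unmulg V))).
Proof.
  intros H1 H2 HB. unfold Gc at 1, Hc at 1.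
  rewrite (count_split _ (fun w => (wk w =? 0)%nat)).
  rewrite (count_split (fun w => (wsz w =? s)%nat && peqb (wsp w) V) (fun w => (wk w =? 0)%nat)).
  fold (G0 V) (H0 V). rewrite G_shift, H_shift by lia. lia.
Qed.

Definition ev (V : Z*Z) : Z :=
  if (fst V =? 0) && (snd V =? 0) then 0
  else ind (Z.of_nat s =? fst V + snd V) +
       ind ((1 <=? fst V) && (1 <=? snd V) && (Z.of_nat s =? fst V + snd V - 1)).

Lemma local_id_aux n : forall V, 0 <= fst V -> 0 <= snd V -> fst V + snd V <= Z.of_nat n ->
  fst V + snd V <= Z.of_nat B ->
  Z.of_nat (Gc V) - Z.of_nat (Hc V) = ev V.
Proof.
  induction n; intros [v1 v2] H1 H2 Hn HB; cbn [fst snd] in *.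
  - assert (v1 = 0 /\ v2 = 0) as [-> ->] by lia.
    rewrite Gc_neg, Hc_neg by (right; right; reflexivity). reflexivity.
  - destruct (Z.eq_dec v1 0) as [->|Hv1].
    + destruct (Z.eq_dec v2 0) as [->|Hv2].
      { rewrite Gc_neg, Hc_neg by (right; right; reflexivity). reflexivity. }
      rewrite D_rec by (cbn [fst snd]; lia). unfold unmulg. cbn [fst snd].
      replace (v2 - 0) with v2 by lia.
      rewrite D_rec by (cbn [fst snd]; lia). unfold unmulg. cbn [fst snd].
      rewrite Gc_neg, Hc_neg by (left; cbn [fst snd]; lia).
      rewrite G0_val, H0_val, G0_val, H0_val by (cbn [fst snd]; lia).
      unfold ev. cbn [fst snd]. zcase; lia.
    + rewrite D_rec by (cbn [fst snd]; lia). unfold unmulg. cbn [fst snd].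
      rewrite G0_val, H0_val by (cbn [fst snd]; lia).
      destruct (Z_lt_le_dec (v2 - v1) 0) as [Hl|Hl].
      * rewrite Gc_neg, Hc_neg by (left; cbn [fst snd]; lia).
        unfold ev. cbn [fst snd]. zcase; lia.
      * rewrite (IHn (v2 - v1, v1)) by (cbn [fst snd]; lia).
        unfold ev. cbn [fst snd]. zcase; lia.
Qed.

Lemma local_id V : 0 <= fst V -> 0 <= snd V -> fst V + snd V <= Z.of_nat B ->
  Z.of_nat (Gc V) - Z.of_nat (Hc V) = ev V.
Proof.
  intros H1 H2 H3. apply (local_id_aux (Z.to_nat (fst V + snd V))); lia.
Qed.

End Count.

Section Region.
Variables (d1 d2 s : nat).

Definition inR (j e : Z) (V : Z*Z) : bool :=
  (0 <=? fst V) && (fst V <=? Z.of_nat d1) && (0 <=? snd V) &&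
  ((snd V <? j) || ((snd V =? j) && (fst V <? e))).

Definition Ncount (j e : Z) : nat :=
  length (filter (fun w => (wsz w =? s)%nat && inR j e (wcs w) && negb (inR j e (wsp w)))
                 (Wall (d1 + d2))).

Lemma pt_facts (X Y : Z*Z) (j e : Z) : 0 <= fst X -> 0 <= snd X -> fst X <= fst Y ->
  snd X + 1 <= snd Y -> 0 <= e <= Z.of_nat d1 -> 0 <= j ->
  (peqb X (e, j) = true -> inR j (e+1) X && negb (inR j (e+1) Y) = true) /\
  (peqb Y (e, j) = true -> inR j e X && negb (inR j e Y) = true) /\
  (inR j (e+1) X && negb (inR j (e+1) Y) && negb (peqb X (e,j)) =
   inR j e X && negb (inR j e Y) && negb (peqb Y (e,j))).
Proof.
  destruct X as [x1 x2], Y as [y1 y2]. unfold inR, peqb. cbn [fst snd]. intros.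
  zcase; repeat split; intros; try discriminate; try reflexivity.
Qed.

Lemma Ncount_step j e : 0 <= j -> 0 <= e <= Z.of_nat d1 ->
  Z.of_nat (Ncount j (e+1)) =
  Z.of_nat (Ncount j e) + Z.of_nat (Gc (d1 + d2) s (e, j)) - Z.of_nat (Hc (d1 + d2) s (e, j)).
Proof.
  intros Hj He. unfold Ncount, Gc, Hc.
  set (U := Wall (d1 + d2)).
  set (Pn := fun w => (wsz w =? s)%nat && inR j (e+1) (wcs w) && negb (inR j (e+1) (wsp w))).
  set (Po := fun w => (wsz w =? s)%nat && inR j e (wcs w) && negb (inR j e (wsp w))).
  set (Gp := fun w => (wsz w =? s)%nat && peqb (wcs w) (e, j)).
  set (Hp := fun w => (wsz w =? s)%nat && peqb (wsp w) (e, j)).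
  assert (F : forall w, In w U ->
    (Gp w = true -> Pn w = true) /\ (Hp w = true -> Po w = true) /\
    (Pn w && negb (Gp w) = Po w && negb (Hp w))).
  { intros w Hw. pose proof (wcs_ge _ w Hw). pose proof (wsp_ge _ w Hw).
    destruct (pt_facts (wcs w) (wsp w) j e ltac:(lia) ltac:(lia) ltac:(lia) ltac:(lia) He Hj)
      as (A1 & A2 & A3).
    unfold Pn, Po, Gp, Hp. destruct (wsz w =? s)%nat; cbn [andb negb].
    - split; [|split]; [exact A1|exact A2|]. rewrite <- !Bool.andb_assoc in A3. 
      rewrite <- !Bool.andb_assoc. exact A3.
    - split; [discriminate|split; [discriminate|reflexivity]]. }
  rewrite (count_split Pn Gp), (count_split Po Hp).
  rewrite (count_ext (fun w => Pn w && Gp w) Gp) by (intros w Hw; destruct (F w Hw) as (A & _ & _);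
     destruct (Gp w); [rewrite A; reflexivity|apply Bool.andb_false_r]).
  rewrite (count_ext (fun w => Po w && Hp w) Hp) by (intros w Hw; destruct (F w Hw) as (_ & A & _);
     destruct (Hp w); [rewrite A; reflexivity|apply Bool.andb_false_r]).
  rewrite (count_ext (fun w => Pn w && negb (Gp w)) (fun w => Po w && negb (Hp w)))
    by (intros w Hw; destruct (F w Hw) as (_ & _ & A); exact A).
  lia.
Qed.

Lemma Ncount_row j : Ncount j (Z.of_nat d1 + 1) = Ncount (j + 1) 0.
Proof.
  unfold Ncount. apply count_ext. intros w _.
  assert (E : forall V, inR j (Z.of_nat d1 + 1) V = inR (j + 1) 0 V).
  { intros [v1 v2]. unfold inR. cbn [fst snd]. zcase; reflexivity. }
  rewrite !E. reflexivity.
Qed.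

Lemma Ncount_00 : Ncount 0 0 = 0%nat.
Proof.
  unfold Ncount. apply count_zero. intros w _.
  assert (E : forall V, inR 0 0 V = false).
  { intros [v1 v2]. unfold inR. cbn [fst snd]. zcase; reflexivity. }
  rewrite E. rewrite Bool.andb_false_r. reflexivity.
Qed.

Definition rowp (e j : Z) : Z :=
  if j =? 0 then ind ((1 <=? Z.of_nat s) && (Z.of_nat s <? e))
  else ind ((j <=? Z.of_nat s) && (Z.of_nat s <? j + e)) +
       ind ((j <=? Z.of_nat s) && (Z.of_nat s <? j + e - 1)).

Lemma rowp_step e j : 0 <= e -> 0 <= j -> rowp (e + 1) j = rowp e j + ev s (e, j).
Proof. intros. unfold rowp, ev. cbn [fst snd]. zcase; lia. Qed.

Lemma rowp_0 j : 0 <= j -> rowp 0 j = 0.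
Proof. intros. unfold rowp. zcase; lia. Qed.

Fixpoint Fz (J : nat) : Z :=
  match J with
  | O => 0
  | S J' => Fz J' + rowp (Z.of_nat d1 + 1) (Z.of_nat J')
  end.

Lemma Ncount_val (j : nat) : (j <= d2)%nat -> forall e : nat, (e <= d1 + 1)%nat ->
  Z.of_nat (Ncount (Z.of_nat j) (Z.of_nat e)) = Fz j + rowp (Z.of_nat e) (Z.of_nat j).
Proof.
  induction j as [|j IHj]; intros Hj.
  - induction e as [|e IHe]; intros He.
    + change (Z.of_nat 0) with 0. rewrite Ncount_00. simpl. unfold rowp. zcase; lia.
    + replace (Z.of_nat (S e)) with (Z.of_nat e + 1) by lia.
      rewrite Ncount_step by lia. rewrite IHe by lia.
      pose proof (local_id (d1 + d2) s (Z.of_nat e, Z.of_nat 0) ltac:(cbn [fst snd]; lia)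
                    ltac:(cbn [fst snd]; lia) ltac:(cbn [fst snd]; lia)).
      rewrite rowp_step by lia. lia.
  - induction e as [|e IHe]; intros He.
    + replace (Z.of_nat (S j)) with (Z.of_nat j + 1) by lia.
      rewrite <- Ncount_row.
      replace (Z.of_nat d1 + 1) with (Z.of_nat (d1 + 1)) by lia.
      rewrite IHj by lia. simpl Fz. rewrite rowp_0 by lia.
      replace (Z.of_nat (d1 + 1)) with (Z.of_nat d1 + 1) by lia. lia.
    + replace (Z.of_nat (S e)) with (Z.of_nat e + 1) by lia.
      rewrite Ncount_step by lia. rewrite IHe by lia.
      pose proof (local_id (d1 + d2) s (Z.of_nat e, Z.of_nat (S j)) ltac:(cbn [fst snd]; lia)
                    ltac:(cbn [fst snd]; lia) ltac:(cbn [fst snd]; lia)).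
      rewrite rowp_step by lia. lia.
Qed.

Lemma Ncount_final : Z.of_nat (Ncount (Z.of_nat d2 + 1) 0) = Fz (S d2).
Proof.
  rewrite <- Ncount_row.
  replace (Z.of_nat d1 + 1) with (Z.of_nat (d1 + 1)) by lia.
  rewrite Ncount_val by lia. simpl Fz.
  replace (Z.of_nat (d1 + 1)) with (Z.of_nat d1 + 1) by lia. lia.
Qed.

End Region.

Lemma chi_Z d1 d2 s : Z.of_nat (chi_formula d1 d2 s) =
  if (s <=? d1 + d2)%nat then
    2 * Z.min (Z.min (Z.of_nat d1) (Z.of_nat d2)) (Z.min (Z.of_nat s) (Z.of_nat d1 + Z.of_nat d2 - Z.of_nat s)) + 1
  else 0.
Proof.
  unfold chi_formula. destruct (Nat.leb_spec s (d1 + d2)); lia.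
Qed.

Lemma Fz_val d1 s J : Fz d1 s (S J) = Z.of_nat (chi_formula d1 J s) - ind (Z.of_nat s =? 0).
Proof.
  induction J.
  - simpl Fz. rewrite chi_Z. unfold rowp. 
    destruct (Nat.leb_spec s (d1 + 0)); zcase; lia.
  - change (Fz d1 s (S (S J))) with (Fz d1 s (S J) + rowp s (Z.of_nat d1 + 1) (Z.of_nat (S J))).
    rewrite IHJ, !chi_Z. unfold rowp.
    destruct (Nat.leb_spec s (d1 + J)); destruct (Nat.leb_spec s (d1 + S J)); zcase; lia.
Qed.

Definition wv (w : W4) : Z*Z := let '(k, a, b, c) := w in wval k a b c.

Lemma inR_box d1 d2 X : 0 <= fst X -> 0 <= snd X ->
  (inR d1 (Z.of_nat d2 + 1) 0 X = true <-> fst X <= Z.of_nat d1 /\ snd X <= Z.of_nat d2).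
Proof.
  destruct X as [x1 x2]. unfold inR. cbn [fst snd]. intros. zcase; split; intros; try discriminate; try lia; reflexivity.
Qed.

Lemma win_iff d1 d2 s k a b c : In (k, a, b, c) (Wall (d1 + d2)) ->
  ((wsz (k, a, b, c) =? s)%nat && inR d1 (Z.of_nat d2 + 1) 0 (wcs (k, a, b, c)) &&
     negb (inR d1 (Z.of_nat d2 + 1) 0 (wsp (k, a, b, c))) = true <->
   maxwin d1 d2 s k a b c).
Proof.
  intros Hw. pose proof (wcs_ge (d1 + d2) _ Hw) as G1. pose proof (wsp_ge (d1 + d2) _ Hw) as G2.
  apply in_Wall in Hw.
  rewrite !Bool.andb_true_iff, Bool.negb_true_iff, Nat.eqb_eq.
  rewrite inR_box by lia.
  assert (E : inR d1 (Z.of_nat d2 + 1) 0 (wsp (k, a, b, c)) = false <->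
              ~ (fst (wsp (k, a, b, c)) <= Z.of_nat d1 /\ snd (wsp (k, a, b, c)) <= Z.of_nat d2)).
  { rewrite <- inR_box by lia. destruct (inR _ _ _ _); split; intros; try discriminate; try tauto;
    exfalso; apply H; reflexivity. }
  rewrite E. cbn [wsz wcs wsp fst snd]. unfold maxwin. cbn [fst snd].
  split; intros; tauto || lia.
Qed.

Theorem mainTheorem2 (d1 d2 s : nat) :
  has_card (max_admits d1 d2 s) (chi_formula d1 d2 s).
Proof.
  set (P := fun w => (wsz w =? s)%nat && inR d1 (Z.of_nat d2 + 1) 0 (wcs w) &&
                     negb (inR d1 (Z.of_nat d2 + 1) 0 (wsp w))).
  set (WL := filter P (Wall (d1 + d2))).
  assert (F1 : forall k a b c, In (k, a, b, c) WL <->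
                 In (k, a, b, c) (Wall (d1 + d2)) /\ maxwin d1 d2 s k a b c).
  { intros k a b c. unfold WL. rewrite filter_In. split.
    - intros [H1 H2]. split; [exact H1|]. apply (win_iff d1 d2 s k a b c H1). exact H2.
    - intros [H1 H2]. split; [exact H1|]. apply (win_iff d1 d2 s k a b c H1). exact H2. }
  assert (F2 : s = 0%nat -> WL = []).
  { intros Hs. assert (H0 : forall w, ~ In w WL).
    { intros [[[k a] b] c] Hw. apply F1 in Hw. destruct Hw as [_ (Ha & Hsz & _)]. lia. }
    destruct WL as [|w l] eqn:E; [reflexivity|exfalso].
    apply (H0 w). left. reflexivity. }
  exists (map wv WL ++ (if (s =? 0)%nat then [(0,0)] else [])).
  split; [|split].
  - destruct (Nat.eqb_spec s 0) as [Hs|Hs].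
    + rewrite (F2 Hs). simpl. constructor; [simpl; tauto|constructor].
    + rewrite app_nil_r. apply NoDup_map_NoDup_ForallPairs.
      * intros [[[k a] b] c] [[[k' a'] b'] c'] H1 H2 E.
        apply F1 in H1, H2. destruct H1 as [_ (Ha & Hs1 & _)]. destruct H2 as [_ (Ha' & Hs2 & _)].
        cbn [wv] in E.
        destruct (same_window k a b c k' a' b' c' Ha Ha' E ltac:(lia)) as (-> & -> & -> & ->).
        reflexivity.
      * apply NoDup_filter, Wall_NoDup.
  - intros [m n]. rewrite char. rewrite in_app_iff, in_map_iff. split.
    + intros [(w & Ew & Hw)|H].
      * destruct w as [[[k a] b] c]. apply F1 in Hw. destruct Hw as [_ Hm].
        right. exists k, a, b, c. split; [exact Hm|exact Ew].
      * destruct (Nat.eqb_spec s 0) as [Hs|Hs]; [|destruct H].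
        destruct H as [H|[]]. injection H; intros; subst. left; auto.
    + intros [(Hs & -> & ->)|(k & a & b & c & Hm & EV)].
      * right. subst s. simpl. left; reflexivity.
      * left. exists (k, a, b, c). split; [exact EV|]. apply F1. split; [|exact Hm].
        destruct Hm as (Ha & Hs & C1 & C2 & _).
        pose proof (window_bound k a b c Ha). apply in_Wall. lia.
  - rewrite length_app, length_map.
    pose proof (Ncount_final d1 d2 s) as N. rewrite Fz_val in N.
    unfold Ncount in N. fold P in N. fold WL in N.
    destruct (Nat.eqb_spec s 0) as [Hs|Hs].
    + subst s. simpl length. simpl in N. lia.
    + simpl length. replace (ind (Z.of_nat s =? 0)) with 0 in N by (unfold ind; zcase; lia). lia.
Qed.
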